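(* Let $\lambda>0$, $0<\gamma\le\frac{\lambda}{\lambda^2+2\lambda(1+\beta)\Phi_{\max}^2+(1+\beta)^2\Phi_{\max}^4}$, and $\tilde C=I-\gamma(A+\lambda I)$. For every random vector $x\in\mathbb R^d$ with $\mathbb E\|x\|_2^2<\infty$ and every $t\ge0$, $$\sum_{i=0}^{t}\mathbb E\big[\|\tilde C^ix\|_2^2\big]\le\frac{\mathbb E\|x\|_2^2}{\gamma(\mu+\lambda)}.$$
   Context: Let $\mathcal S=\{1,\dots,n\}$ be finite, $\pi$ a policy with irreducible state transition matrix $P^\pi$ and stationary distribution $\rho$, $D=\mathrm{diag}(\rho)$, $\beta\in(0,1)$, features $\phi:\mathcal S\to\mathbb R^d$ with $\|\phi(s)\|_2\le\Phi_{\max}$, $\Phi\in\mathbb R^{n\times d}$ with rows $\phi(s)^\top$ of full column rank, $A=\Phi^\top D(I-\beta P^\pi)\Phi$. The paper calls $\mu$ ''the minimum eigenvalue of $A$''; take $\mu=\lambda_{\min}((A+A^\top)/2)>0$. *)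

(* Defs.v *)
From HB Require Import structures.
From mathcomp Require Import all_boot all_order all_algebra.
From mathcomp Require Import all_classical all_reals all_analysis.
Set Implicit Arguments. Unset Strict Implicit. Unset Printing Implicit Defensive.
Import Order.TTheory GRing.Theory Num.Theory.
Local Open Scope ring_scope.

Definition sqnorm (R : realType) (d : nat) (v : 'cV[R]_d) : R :=
  \sum_(i < d) v i 0 ^+ 2.

(* Euclidean norm of a row vector (feature vector phi(s) = row s Phi) *)
Definition rnorm (R : realType) (d : nat) (v : 'rV[R]_d) : R :=
  Num.sqrt (\sum_(j < d) v 0 j ^+ 2).

Definition stochastic (R : realType) (n : nat) (P : 'M[R]_n) : Prop :=
  (forall i j, 0 <= P i j) /\ (forall i, \sum_(j < n) P i j = 1).

Definition irreducible_mx (R : realType) (n : nat) (P : 'M[R]_n) : Prop :=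
  forall i j : 'I_n, exists k : nat, 0 < (P ^+ k) i j.

Definition stationary_dist (R : realType) (n : nat) (P : 'M[R]_n) (rho : 'rV[R]_n) : Prop :=
  (forall i, 0 <= rho 0 i) /\ \sum_(i < n) rho 0 i = 1 /\ rho *m P = rho.

Definition TD_A (R : realType) (n d : nat) (Phi : 'M[R]_(n, d)) (rho : 'rV[R]_n)
  (P : 'M[R]_n) (beta : R) : 'M[R]_d :=
  Phi^T *m diag_mx rho *m (1%:M - beta *: P) *m Phi.

Definition min_eigenvalue (R : realType) (d : nat) (S : 'M[R]_d) (mu : R) : Prop :=
  eigenvalue S mu /\ (forall a, eigenvalue S a -> mu <= a).

(* Main.v *)
Require Import Defs.
From HB Require Import structures.
From mathcomp Require Import all_boot all_order all_algebra.
From mathcomp Require Import all_classical all_reals all_analysis.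
From mathcomp Require Import measurable_realfun.
From mathcomp Require Import ring lra.
Import Order.TTheory GRing.Theory Num.Theory.
Local Open Scope ring_scope.

Section Alg.
Variable R : realFieldType.
Set Implicit Arguments. Unset Strict Implicit. Unset Printing Implicit Defensive.


Definition dot d (u v : 'cV[R]_d) : R := \sum_(i < d) u i 0 * v i 0.

Lemma dotC d (u v : 'cV[R]_d) : dot u v = dot v u.
Proof. by apply: eq_bigr => i _; rewrite mulrC. Qed.

Lemma dotDr d (u v w : 'cV[R]_d) : dot u (v + w) = dot u v + dot u w.
Proof. by rewrite /dot -big_split; apply: eq_bigr => i _; rewrite mxE mulrDr. Qed.

Lemma dotZr d a (u v : 'cV[R]_d) : dot u (a *: v) = a * dot u v.
Proof. by rewrite /dot mulr_sumr; apply: eq_bigr => i _; rewrite mxE mulrCA. Qed.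

Lemma dotDl d (u v w : 'cV[R]_d) : dot (v + w) u = dot v u + dot w u.
Proof. by rewrite dotC dotDr !(dotC u). Qed.

Lemma dotZl d a (u v : 'cV[R]_d) : dot (a *: v) u = a * dot v u.
Proof. by rewrite dotC dotZr dotC. Qed.

Lemma dot_ge0 d (u : 'cV[R]_d) : 0 <= dot u u.
Proof. by apply: sumr_ge0 => i _; rewrite -expr2 sqr_ge0. Qed.

Lemma dot_tr d e (M : 'M[R]_(d, e)) (u : 'cV[R]_d) (v : 'cV[R]_e) :
  dot u (M *m v) = dot (M^T *m u) v.
Proof.
rewrite /dot; under eq_bigr do rewrite mxE big_distrr.
rewrite exchange_big; apply: eq_bigr => j _; rewrite mxE big_distrl.
by apply: eq_bigr => i _; rewrite mxE /=; ring.
Qed.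

Lemma dot_comb d a b (u v : 'cV[R]_d) :
  dot (a *: u + b *: v) (a *: u + b *: v) =
  a ^+ 2 * dot u u + 2 * a * b * dot u v + b ^+ 2 * dot v v.
Proof.
rewrite !dotDl !dotDr !dotZl !dotZr (dotC v u); ring.
Qed.

Lemma sq_le_sum d (u : 'cV[R]_d) i : u i 0 ^+ 2 <= dot u u.
Proof.
rewrite /dot (bigD1 i) //= -expr2 lerDl; apply: sumr_ge0 => j _.
by rewrite -expr2 sqr_ge0.
Qed.

Lemma sum_sq_exp n (p a : 'I_n -> R) (m : R) :
  \sum_i p i * (a i - m) ^+ 2 =
   \sum_i p i * a i ^+ 2 - 2 * m * (\sum_i p i * a i) + m ^+ 2 * \sum_i p i.
Proof.
rewrite !mulr_sumr -sumrB -big_split.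
by apply: eq_bigr => i _ /=; ring.
Qed.

Lemma sum_sq_exp2 n (a b : 'I_n -> R) (B C : R) :
  \sum_i (B * a i - C * b i) ^+ 2 =
    B ^+ 2 * (\sum_i a i ^+ 2) - 2 * B * C * (\sum_i a i * b i) + C ^+ 2 * \sum_i b i ^+ 2.
Proof.
rewrite !mulr_sumr -sumrB -big_split.
by apply: eq_bigr => i _ /=; ring.
Qed.

Lemma jensen_sq n (p a : 'I_n -> R) : (forall i, 0 <= p i) ->
  \sum_i p i = 1 -> (\sum_i p i * a i) ^+ 2 <= \sum_i p i * a i ^+ 2.
Proof.
move=> p0 p1.
have := sum_sq_exp p a (\sum_i p i * a i).
have : 0 <= \sum_i p i * (a i - \sum_i p i * a i) ^+ 2.
  by apply: sumr_ge0 => i _; rewrite mulr_ge0 ?sqr_ge0.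
rewrite p1; set m := \sum_i p i * a i; move=> h E; rewrite E in h; nra.
Qed.

Lemma cauchy_schwarz n (a b : 'I_n -> R) :
  (\sum_i a i * b i) ^+ 2 <= (\sum_i a i ^+ 2) * (\sum_i b i ^+ 2).
Proof.
have E := sum_sq_exp2 a b (\sum_i b i ^+ 2) (\sum_i a i * b i).
have H : 0 <= \sum_i ((\sum_i b i ^+ 2) * a i - (\sum_i a i * b i) * b i) ^+ 2.
  by apply: sumr_ge0 => i _; rewrite sqr_ge0.
rewrite E in H; move: H.
set A := \sum_i a i ^+ 2; set B := \sum_i b i ^+ 2; set C := \sum_i a i * b i.
move=> H.
have B0 : 0 <= B by apply: sumr_ge0 => i _; rewrite sqr_ge0.
have [Bz|Bp] := eqVneq B 0.
  have bz : forall i, b i = 0.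
    move=> i; apply/eqP; rewrite -sqrf_eq0 eq_le sqr_ge0 andbT -Bz.
    by rewrite /B (bigD1 i) //= lerDl; apply: sumr_ge0 => j _; rewrite sqr_ge0.
  have C0 : C = 0 by rewrite /C big1 // => i _; rewrite bz mulr0.
  by rewrite C0 Bz expr2 !mul0r mulr0.
have Bp' : 0 < B by rewrite lt_def Bp B0.
have H2 : 0 <= B * (A * B - C ^+ 2) by move: H; congr (_ <= _); ring.
by rewrite -subr_ge0; rewrite (pmulr_rge0 _ Bp') in H2.
Qed.

End Alg.

Section Ray.
Variable R : realType.
Set Implicit Arguments. Unset Strict Implicit. Unset Printing Implicit Defensive.
Local Open Scope classical_set_scope.


Definition kap d (B : 'M[R]_d) : R := \sum_i \sum_j `|B i j|.

Lemma kap_ge0 d (B : 'M[R]_d) : 0 <= kap B.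
Proof. by apply: sumr_ge0 => i _; apply: sumr_ge0 => j _. Qed.

Lemma absprod_le (x y N : R) : x ^+ 2 <= N -> y ^+ 2 <= N -> `|x * y| <= N.
Proof.
move=> hx hy; rewrite normrM.
have ax := normr_ge0 x; have ay := normr_ge0 y.
rewrite -[x ^+ 2]real_normK ?num_real // in hx.
rewrite -[y ^+ 2]real_normK ?num_real // in hy; nra.
Qed.

Lemma qbound d (B : 'M[R]_d) (v : 'cV[R]_d) : `|dot v (B *m v)| <= kap B * dot v v.
Proof.
rewrite /dot; under eq_bigr do rewrite mxE big_distrr.
apply: (le_trans (ler_norm_sum _ _ _)).
rewrite /kap mulr_suml; apply: ler_sum => i _.
apply: (le_trans (ler_norm_sum _ _ _)).
rewrite mulr_suml; apply: ler_sum => j _ /=.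
rewrite mulrCA normrM ler_wpM2l //.
by apply: absprod_le; apply: (sq_le_sum v).
Qed.

Lemma Nbound d (B : 'M[R]_d) (v : 'cV[R]_d) :
  dot (B *m v) (B *m v) <= kap (B^T *m B) * dot v v.
Proof.
rewrite [X in X <= _]dot_tr mulmxA dotC; apply: le_trans (qbound _ _); exact: ler_norm.
Qed.

Lemma dot_scalar d (m : R) (v : 'cV[R]_d) : dot v (m%:M *m v) = m * dot v v.
Proof. by rewrite mul_scalar_mx dotZr. Qed.

Lemma dot0_eq0 d (v : 'cV[R]_d) : dot v v = 0 -> v = 0.
Proof.
move=> h; apply/matrixP => i j; rewrite (ord1 j) mxE.
apply/eqP; rewrite -sqrf_eq0 eq_le sqr_ge0 andbT -h; exact: sq_le_sum.
Qed.

Lemma dotBr d (u v w : 'cV[R]_d) : dot u (v - w) = dot u v - dot u w.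
Proof. by rewrite dotDr -scaleN1r dotZr mulN1r. Qed.

Lemma dotBl d (u v w : 'cV[R]_d) : dot (v - w) u = dot v u - dot w u.
Proof. by rewrite dotC dotBr !(dotC u). Qed.

Lemma psd_bound d (M : 'M[R]_d) : M^T = M ->
  (forall v : 'cV[R]_d, 0 <= dot v (M *m v)) ->
  forall v : 'cV[R]_d, dot (M *m v) (M *m v) <= (kap M + 1) * dot v (M *m v).
Proof.
move=> sM psd v; set K := kap M + 1.
have K0 : 0 < K by rewrite /K ltr_pwDr ?kap_ge0.
set w := M *m v.
have h := psd (v - K^-1 *: w).
have e : dot (v - K^-1 *: w) (M *m (v - K^-1 *: w)) =
   dot v w - 2 * K^-1 * dot w w + K^-1 ^+ 2 * dot w (M *m w).
  rewrite mulmxBr -scalemxAr dotBl !dotBr !dotZl !dotZr.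
  rewrite [dot v (M *m w)]dot_tr sM -/w.
  ring.
have hw : dot w (M *m w) <= K * dot w w.
  apply: le_trans (ler_norm _) _; apply: le_trans (qbound _ _) _.
  by rewrite ler_wpM2r ?dot_ge0 // /K lerDl.
rewrite e in h.
have Kip : 0 < K^-1 by rewrite invr_gt0.
have h1 := ler_wpM2l (ltW (exprn_gt0 2 Kip)) hw.
have e2 : K^-1 ^+ 2 * (K * dot w w) = K^-1 * dot w w.
  by rewrite expr2 -mulrA (mulrA K^-1 K) mulVf ?gt_eqF // mul1r.
rewrite e2 in h1.
have h2 : 0 <= dot v w - K^-1 * dot w w by lra.
have := mulr_ge0 (ltW K0) h2.
by rewrite mulrBr mulrA mulfV ?gt_eqF // mul1r subr_ge0.
Qed.

Lemma rayleigh d (S : 'M[R]_d) : (0 < d)%N -> S^T = S ->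
  exists m, eigenvalue S m /\ forall v, m * dot v v <= dot v (S *m v).
Proof.
move=> d0 sS.
pose E : set R := fun r => exists2 v : 'cV[R]_d, dot v v != 0 & r = dot v (S *m v) / dot v v.
have Ene : exists r, E r.
  pose v1 : 'cV[R]_d := const_mx 1.
  exists (dot v1 (S *m v1) / dot v1 v1); exists v1 => //.
  rewrite /dot (eq_bigr (fun _ => 1)) => [|i _]; last by rewrite !mxE mulr1.
  by rewrite sumr_const card_ord pnatr_eq0 -lt0n.
have Elb : has_lbound E.
  exists (- kap S) => r [v Nv ->].
  have Np : 0 < dot v v by rewrite lt_def Nv dot_ge0.
  rewrite ler_pdivlMr // mulNr lerNl.
  apply: le_trans (qbound S v); rewrite -normrN; exact: ler_norm.
set m := inf E.
have key : forall v, m * dot v v <= dot v (S *m v).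
  move=> v; have [N0|Nv] := eqVneq (dot v v) 0.
    have := qbound S v; rewrite N0 mulr0 normr_le0 => /eqP ->; by rewrite mulr0.
  have Np : 0 < dot v v by rewrite lt_def Nv dot_ge0.
  rewrite -ler_pdivlMr //; apply: (ge_inf Elb); by exists v.
exists m; split => //.
set M := S - m%:M.
have sM : M^T = M by rewrite /M linearB /= sS tr_scalar_mx.
have qM : forall v, dot v (M *m v) = dot v (S *m v) - m * dot v v.
  by move=> v; rewrite /M mulmxBl dotBr dot_scalar.
have psd : forall v : 'cV[R]_d, 0 <= dot v (M *m v).
  by move=> v; rewrite qM subr_ge0.
have detM : \det M == 0.
  apply/negPn/negP => dM.
  set dl := \det M.
  set L := kap ((\adj M)^T *m \adj M); set K := kap M + 1.
  have L0 : 0 <= L by apply: kap_ge0.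
  have K0 : 0 < K by rewrite /K ltr_pwDr ?kap_ge0.
  have dl2 : 0 < dl ^+ 2 by rewrite exprn_even_gt0.
  set eps := dl ^+ 2 / (L * K + 1).
  have LK1 : 0 < L * K + 1 by rewrite ltr_pwDr ?mulr_ge0 // ltW.
  have eps0 : 0 < eps by rewrite divr_gt0.
  have [r [v Nv ->] rlt] := inf_adherent eps0 (conj Ene Elb).
  have Np : 0 < dot v v by rewrite lt_def Nv dot_ge0.
  rewrite ltr_pdivrMr // in rlt.
  have hq : dot v (M *m v) <= eps * dot v v by rewrite qM; lra.
  have h1 := Nbound (\adj M) (M *m v).
  have h2 := psd_bound sM psd v.
  rewrite mulmxA mul_adj_mx mul_scalar_mx dotZl dotZr mulrA -expr2 -/L in h1.
  have h3 : dl ^+ 2 * dot v v <= (L * K) * (eps * dot v v).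
    apply: le_trans h1 _; rewrite -mulrA ler_wpM2l //.
    apply: le_trans (ler_wpM2l (ltW K0) hq); by [].
  have h4 : (L * K) * (eps * dot v v) * (L * K + 1) = L * K * (dl ^+ 2 * dot v v).
    by rewrite /eps; field; rewrite gt_eqF.
  have h5 := ler_wpM2r (ltW LK1) h3; rewrite h4 in h5.
  have h6 : 0 < dl ^+ 2 * dot v v by rewrite mulr_gt0.
  move: h5 h6; move: (dl ^+ 2 * dot v v) (L * K) => X c h5 h6.
  clear -h5 h6; nra.
have [u u0 uM] := det0P detM.
apply/eigenvalueP; exists u => //.
by move: uM; rewrite /M mulmxBr mul_mx_scalar => /eqP; rewrite subr_eq0 => /eqP.
Qed.

End Ray.

Section TD.
Variable R : realType.
Set Implicit Arguments. Unset Strict Implicit. Unset Printing Implicit Defensive.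


Lemma stat_ineq n (P : 'M[R]_n) (rho : 'rV[R]_n) (w : 'I_n -> R) :
  stochastic P -> stationary_dist P rho ->
  \sum_i rho 0 i * w i * (\sum_j P i j * w j) <= \sum_i rho 0 i * w i ^+ 2.
Proof.
move=> [P0 P1] [r0 [r1 rP]].
have e1 : \sum_i rho 0 i * w i * (\sum_j P i j * w j) =
          \sum_i \sum_j (rho 0 i * P i j) * (w i * w j).
  by apply: eq_bigr => i _; rewrite big_distrr; apply: eq_bigr => j _ /=; ring.
have e2 : \sum_i \sum_j (rho 0 i * P i j) * ((w i ^+ 2 + w j ^+ 2) / 2) =
   (\sum_i rho 0 i * w i ^+ 2 + \sum_j rho 0 j * w j ^+ 2) / 2.
  have ea : \sum_i \sum_j (rho 0 i * P i j) * (w i ^+ 2) = \sum_i rho 0 i * w i ^+ 2.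
    apply: eq_bigr => i _; rewrite -big_distrl /= -big_distrr /= P1 mulr1 //.
  have eb : \sum_i \sum_j (rho 0 i * P i j) * (w j ^+ 2) = \sum_j rho 0 j * w j ^+ 2.
    rewrite exchange_big /=; apply: eq_bigr => j _; rewrite -big_distrl /=.
    congr (_ * _); have := congr1 (fun M : 'rV[R]_n => M 0 j) rP; rewrite /= mxE.
    by move=> <-.
  rewrite -[X in _ + X]eb -ea -big_split mulr_suml; apply: eq_bigr => i _ /=.
  rewrite -big_split mulr_suml; apply: eq_bigr => j _ /=; ring.
rewrite e1.
have hm : \sum_i \sum_j (rho 0 i * P i j) * (w i * w j) <=
   \sum_i \sum_j (rho 0 i * P i j) * ((w i ^+ 2 + w j ^+ 2) / 2).
  apply: ler_sum => i _; apply: ler_sum => j _.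
  apply: ler_wpM2l; first by rewrite mulr_ge0.
  have := sqr_ge0 (w i - w j); lra.
rewrite e2 in hm; lra.
Qed.

Lemma A_expand n d (P : 'M[R]_n) (rho : 'rV[R]_n) (beta : R) (Phi : 'M[R]_(n, d))
  (v : 'cV[R]_d) :
  dot v (TD_A Phi rho P beta *m v) =
  \sum_i rho 0 i * (Phi *m v) i 0 * ((Phi *m v) i 0 - beta * \sum_j P i j * (Phi *m v) j 0).
Proof.
rewrite /TD_A -!mulmxA dot_tr trmxK /dot; apply: eq_bigr => i _.
rewrite mulmxBl mul1mx -scalemxAl mul_diag_mx !mxE; ring.
Qed.

Lemma A_psd n d (P : 'M[R]_n) (rho : 'rV[R]_n) (beta : R) (Phi : 'M[R]_(n, d)) :
  stochastic P -> stationary_dist P rho -> 0 < beta < 1 ->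
  forall v : 'cV[R]_d, 0 <= dot v (TD_A Phi rho P beta *m v).
Proof.
move=> sP sr /andP[b0 b1] v; rewrite A_expand.
set w := fun i => (Phi *m v) i 0.
have h := stat_ineq w sP sr.
have Y0 : 0 <= \sum_i rho 0 i * w i ^+ 2.
  by apply: sumr_ge0 => i _; rewrite mulr_ge0 ?sqr_ge0 //; case: sr.
have -> : \sum_i rho 0 i * w i * (w i - beta * \sum_j P i j * w j) =
   \sum_i rho 0 i * w i ^+ 2 - beta * \sum_i rho 0 i * w i * (\sum_j P i j * w j).
  rewrite mulr_sumr -sumrB; apply: eq_bigr => i _; ring.
move: h Y0; move: (\sum_i rho 0 i * w i ^+ 2) (\sum_i rho 0 i * w i * (\sum_j P i j * w j)).
move=> Y X h Y0; clear -h Y0 b0 b1; nra.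
Qed.

Lemma rowsq_le n d (Phi : 'M[R]_(n, d)) (Phimax : R) s :
  rnorm (row s Phi) <= Phimax -> \sum_j Phi s j ^+ 2 <= Phimax ^+ 2.
Proof.
rewrite /rnorm; set S := \sum_j _ => h.
have S0 : 0 <= S by apply: sumr_ge0 => j _; rewrite sqr_ge0.
have -> : \sum_j Phi s j ^+ 2 = S by apply: eq_bigr => j _; rewrite mxE.
rewrite -(sqr_sqrtr S0) !expr2; apply: ler_pM => //; exact: sqrtr_ge0.
Qed.

Lemma A_bound n d (P : 'M[R]_n) (rho : 'rV[R]_n) (beta : R) (Phi : 'M[R]_(n, d))
  (Phimax : R) :
  stochastic P -> stationary_dist P rho -> 0 < beta < 1 ->
  (forall s : 'I_n, rnorm (row s Phi) <= Phimax) ->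
  forall v : 'cV[R]_d, dot (TD_A Phi rho P beta *m v) (TD_A Phi rho P beta *m v)
     <= ((1 + beta) * Phimax ^+ 2) ^+ 2 * dot v v.
Proof.
move=> [P0 P1] [r0 [r1 rP]] /andP[b0 b1] hPhi v.
set w := fun s => (Phi *m v) s 0.
set N := dot v v; set B2 := Phimax ^+ 2 * N.
have N0 : 0 <= N by apply: dot_ge0.
have hw : forall s, w s ^+ 2 <= B2.
  move=> s; rewrite /w mxE.
  apply: le_trans (cauchy_schwarz (fun j => Phi s j) (fun j => v j 0)) _.
  have eN : \sum_j v j 0 ^+ 2 = N by rewrite /N /dot; apply: eq_bigr => j _; rewrite expr2.
  rewrite eN /B2.
  apply: ler_wpM2r; [by apply: sumr_ge0 => j _; exact: sqr_ge0 | exact: rowsq_le].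
have hy : forall s, (\sum_t P s t * w t) ^+ 2 <= B2.
  move=> s; have J := jensen_sq w (P0 s) (P1 s); simpl in J.
  have J2 : \sum_t P s t * w t ^+ 2 <= \sum_t P s t * B2.
    by apply: ler_sum => t _; rewrite ler_wpM2l.
  rewrite -big_distrl /= P1 mul1r in J2.
  exact: le_trans J J2.
set z := fun s => w s - beta * \sum_t P s t * w t.
have hz : forall s, z s ^+ 2 <= (1 + beta) ^+ 2 * B2.
  move=> s; rewrite /z; have ha := hw s; have hb := hy s.
  move: ha hb; move: (w s) (\sum_t P s t * w t) => a b ha hb.
  have h1 : 0 <= beta * (a + b) ^+ 2 by rewrite mulr_ge0 ?sqr_ge0 // ltW.
  have h2 : beta * a ^+ 2 <= beta * B2 by rewrite ler_wpM2l // ltW.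
  have h3 : beta * b ^+ 2 <= beta * B2 by rewrite ler_wpM2l // ltW.
  have h4 : beta ^+ 2 * b ^+ 2 <= beta ^+ 2 * B2 by rewrite ler_wpM2l // sqr_ge0.
  have e : (a - beta * b) ^+ 2 = a ^+ 2 - beta * (a + b) ^+ 2 + beta * a ^+ 2
     + beta * b ^+ 2 + beta ^+ 2 * b ^+ 2 + beta * a ^+ 2 + beta * b ^+ 2 - beta * a ^+ 2 - beta * b ^+ 2 by ring.
  have e2 : (1 + beta) ^+ 2 * B2 = B2 + beta * B2 + beta * B2 + beta ^+ 2 * B2 by ring.
  rewrite e e2; lra.
have hAv : forall j, (TD_A Phi rho P beta *m v) j 0 = \sum_s rho 0 s * (Phi s j * z s).
  move=> j; rewrite /TD_A -!mulmxA mxE; apply: eq_bigr => s _.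
  rewrite mulmxBl mul1mx -scalemxAl mul_diag_mx !mxE /z /w.
  rewrite mulrCA; congr (_ * (_ * (_ - _ * _))).
  by rewrite mxE.
rewrite /dot (eq_bigr (fun j => (\sum_s rho 0 s * (Phi s j * z s)) ^+ 2)) => [|j _]; last by rewrite hAv expr2.
apply: le_trans (_ : _ <= \sum_j \sum_s rho 0 s * (Phi s j * z s) ^+ 2) _.
  by apply: ler_sum => j _; apply: jensen_sq.
rewrite exchange_big /=.
apply: le_trans (_ : _ <= \sum_s rho 0 s * (((1 + beta) ^+ 2 * B2) * Phimax ^+ 2)) _.
  apply: ler_sum => s _.
  have -> : \sum_j rho 0 s * (Phi s j * z s) ^+ 2 = \sum_j rho 0 s * (z s ^+ 2 * Phi s j ^+ 2).
    by apply: eq_bigr => j _; rewrite exprMn [X in _ * X]mulrC.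
  rewrite -big_distrr /= ler_wpM2l // -big_distrr /=.
  apply: ler_pM => //; [exact: sqr_ge0| by apply: sumr_ge0 => j _; rewrite sqr_ge0 | exact: rowsq_le].
rewrite -big_distrl /= r1 mul1r /B2 -/N; rewrite le_eqVlt; apply/orP; left; apply/eqP; ring.
Qed.

End TD.

Section Step.
Variable R : realType.
Set Implicit Arguments. Unset Strict Implicit. Unset Printing Implicit Defensive.


Lemma cs_dot d (u w : 'cV[R]_d) : dot u w ^+ 2 <= dot u u * dot w w.
Proof.
have eu : forall x : 'cV[R]_d, dot x x = \sum_i x i 0 ^+ 2.
  by move=> x; apply: eq_bigr => i _; rewrite expr2.
rewrite !eu; exact: (cauchy_schwarz (fun i => u i 0) (fun i => w i 0)).
Qed.

Lemma step n d (P : 'M[R]_n) (rho : 'rV[R]_n) (beta : R) (Phi : 'M[R]_(n, d)) (Phimax : R)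
  (mu lambda gamma : R) :
  stochastic P -> stationary_dist P rho ->
  0 < beta < 1 ->
  (forall s : 'I_n, rnorm (row s Phi) <= Phimax) ->
  min_eigenvalue ((2%:R)^-1 *: (TD_A Phi rho P beta + (TD_A Phi rho P beta)^T)) mu ->
  0 < lambda ->
  0 < gamma ->
  gamma <= lambda / (lambda ^+ 2 + 2%:R * lambda * (1 + beta) * Phimax ^+ 2
                     + (1 + beta) ^+ 2 * Phimax ^+ 4) ->
  [/\ (0 < d)%N, 0 <= mu &
  forall v : 'cV[R]_d,
    dot ((1%:M - gamma *: (TD_A Phi rho P beta + lambda%:M)) *m v)
        ((1%:M - gamma *: (TD_A Phi rho P beta + lambda%:M)) *m v)
    <= (1 - gamma * (mu + lambda)) * dot v v].
Proof.
move=> sP sr hb hPhi [emu minmu] l0 g0 hg.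
set A := TD_A Phi rho P beta.
set S := (2%:R)^-1 *: (A + A^T).
have sS : S^T = S by rewrite /S linearZ /= linearD /= trmxK addrC.
have qS : forall v : 'cV[R]_d, dot v (S *m v) = dot v (A *m v).
  move=> v; rewrite /S -scalemxAl mulmxDl dotZr dotDr [dot v (A^T *m v)]dot_tr trmxK [dot (A *m v) v]dotC.
  by field.
have [u uS u0] := eigenvalueP emu.
have d0 : (0 < d)%N.
  case: d {hPhi A S sS qS emu minmu} Phi u uS u0 => // Phi0 u0' _.
  by rewrite (thinmx0 u0') eqxx.
have psdA := A_psd Phi sP sr hb.
have mu0 : 0 <= mu.
  pose v := u^T.
  have Sv : S *m v = mu *: v by rewrite /v -sS -trmx_mul uS linearZ.
  have Nv : 0 < dot v v.
    rewrite lt_def dot_ge0 andbT; apply/negP => /eqP /dot0_eq0 /eqP.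
    by rewrite /v -(inj_eq (@trmx_inj _ _ _)) trmxK linear0 (negbTE u0).
  have := psdA v; rewrite -qS Sv dotZr => h.
  by rewrite -(pmulr_lge0 _ Nv).
have [m [em km]] := rayleigh d0 sS.
have mum : mu <= m := minmu m em.
set K := (1 + beta) * Phimax ^+ 2.
have K0 : 0 <= K by rewrite mulr_ge0 ?sqr_ge0 //; case/andP: hb => b0 _; rewrite addr_ge0 // ltW.
have hNA := A_bound sP sr hb hPhi.
have hgK : gamma * (lambda + K) ^+ 2 <= lambda.
  have e : lambda ^+ 2 + 2%:R * lambda * (1 + beta) * Phimax ^+ 2 + (1 + beta) ^+ 2 * Phimax ^+ 4
         = (lambda + K) ^+ 2 by rewrite /K; ring.
  have Dp : 0 < (lambda + K) ^+ 2 by rewrite exprn_gt0 // ltr_pwDl.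
  by rewrite e ler_pdivlMr // in hg.
split => // v.
set N := dot v v; set q := dot v (A *m v); set NA := dot (A *m v) (A *m v).
have N0 : 0 <= N by apply: dot_ge0.
have hq1 : mu * N <= q.
  have h := km v; rewrite -/N qS -/q in h; exact: le_trans (ler_wpM2r N0 mum) h.
have hq0 : 0 <= q by apply: psdA.
have hNA' : NA <= K ^+ 2 * N by apply: hNA.
have hq2 : q <= K * N.
  have cs := cs_dot v (A *m v); rewrite -/N -/q -/NA in cs.
  have KN0 : 0 <= K * N by rewrite mulr_ge0.
  have h : q ^+ 2 <= (K * N) ^+ 2.
    have h3 := ler_wpM2l N0 hNA'.
    have e : N * (K ^+ 2 * N) = (K * N) ^+ 2 by ring.
    rewrite e in h3; exact: le_trans cs h3.
  by rewrite -(ler_pXn2r (n:=2)) ?nnegrE.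
have eC : (1%:M - gamma *: (A + lambda%:M)) *m v = (1 - gamma * lambda) *: v + (- gamma) *: (A *m v).
  rewrite mulmxBl mul1mx -scalemxAl mulmxDl mul_scalar_mx scalerDr scalerA.
  rewrite scalerBl scale1r scaleNr opprD addrA.
  by rewrite addrAC.
rewrite eC dot_comb -/N -/q -/NA.
move: hq1 hq0 hq2 hNA' hgK mu0 N0 K0 l0 g0.
move: N q NA K => N q NA K hq1 hq0 hq2 hNA' hgK mu0 N0 K0 l0 g0.
clear -hq1 hq0 hq2 hNA' hgK mu0 N0 K0 l0 g0.
have h1 : - (2 * gamma) * q <= - (2 * gamma) * (mu * N).
  by rewrite !mulNr lerN2 ler_wpM2l // mulr_ge0 // ltW.
have h2 : 2 * gamma ^+ 2 * lambda * q <= 2 * gamma ^+ 2 * lambda * (K * N).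
  by rewrite ler_wpM2l // !mulr_ge0 // ?sqr_ge0 // ltW.
have h3 : gamma ^+ 2 * NA <= gamma ^+ 2 * (K ^+ 2 * N) by rewrite ler_wpM2l // sqr_ge0.
have h4 : gamma * N * (gamma * (lambda + K) ^+ 2) <= gamma * N * lambda.
  by rewrite ler_wpM2l // mulr_ge0 // ltW.
have h5 : 0 <= gamma * (mu * N) by rewrite mulr_ge0 // ?mulr_ge0 // ltW.
have e : (1 - gamma * lambda) ^+ 2 * N + 2 * (1 - gamma * lambda) * - gamma * q + (- gamma) ^+ 2 * NA
  = N - 2 * gamma * lambda * N - (2 * gamma) * q + 2 * gamma ^+ 2 * lambda * q + gamma ^+ 2 * NA
    + gamma ^+ 2 * lambda ^+ 2 * N by ring.
have e2 : gamma * N * (gamma * (lambda + K) ^+ 2) = gamma ^+ 2 * lambda ^+ 2 * N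
   + 2 * gamma ^+ 2 * lambda * (K * N) + gamma ^+ 2 * (K ^+ 2 * N) by ring.
have e3 : (1 - gamma * (mu + lambda)) * N = N - gamma * (mu * N) - gamma * N * lambda by ring.
have e4 : - (2 * gamma) * (mu * N) = - 2 * (gamma * (mu * N)) by ring.
rewrite e e3; rewrite e2 in h4; rewrite e4 in h1; lra.
Qed.

End Step.

Lemma sqnorm_dot (R : realType) d (v : 'cV[R]_d) : sqnorm v = dot v v.
Proof. by apply: eq_bigr => i _; rewrite expr2. Qed.

Lemma geom_bound (R : realType) (r : R) n : 0 <= r -> r < 1 ->
  \sum_(i < n) r ^+ i <= (1 - r)^-1.
Proof.
move=> r0 r1.
have e : (1 - r) * \sum_(i < n) r ^+ i + r ^+ n = 1.
  elim: n => [|n IH]; first by rewrite big_ord0 mulr0 add0r expr0.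
  rewrite big_ord_recr /= mulrDr -[RHS]IH exprS; ring.
have p : 0 < 1 - r by rewrite subr_gt0.
rewrite -[X in _ <= X]mulr1 ler_pdivlMl //.
have := exprn_ge0 n r0; lra.
Qed.

Lemma meas_coord (R : realType) (dT : measure_display) (T : measurableType dT) d
  (x : T -> 'cV[R]_d) (M : 'M[R]_d) (k : 'I_d) :
  (forall i : 'I_d, measurable_fun setT (fun w => x w i 0)) ->
  measurable_fun setT (fun w => (M *m x w) k 0).
Proof.
move=> hx.
have -> : (fun w => (M *m x w) k 0) = (fun w => \sum_(j <- enum 'I_d) (fun j w => M k j * x w j 0) j w).
  by apply/funext => w; rewrite mxE big_enum.
apply: measurable_sum => j.
by apply: measurable_realfun.measurable_funM => //; exact: measurable_cst.
Qed.

Lemma meas_sqnormR (R : realType) (dT : measure_display) (T : measurableType dT) d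
  (x : T -> 'cV[R]_d) (M : 'M[R]_d) :
  (forall i : 'I_d, measurable_fun setT (fun w => x w i 0)) ->
  measurable_fun [set: T] (fun w => sqnorm (M *m x w)).
Proof.
move=> hx.
have -> : (fun w => sqnorm (M *m x w)) =
    (fun w => \sum_(k <- enum 'I_d) (fun k w => (M *m x w) k 0 ^+ 2) k w).
  by apply/funext => w; rewrite /sqnorm big_enum.
apply: measurable_sum => k; apply: measurable_funX; exact: meas_coord.
Qed.

Lemma meas_sqnorm0 (R : realType) (dT : measure_display) (T : measurableType dT) d
  (x : T -> 'cV[R]_d) :
  (forall i : 'I_d, measurable_fun setT (fun w => x w i 0)) ->
  measurable_fun [set: T] (fun w => sqnorm (x w)).
Proof.
move=> hx; have := @meas_sqnormR _ _ _ _ x 1%:M hx.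
by have -> : (fun w => sqnorm (1%:M *m x w)) = (fun w => sqnorm (x w))
  by apply/funext => w; rewrite mul1mx.
Qed.

Lemma meas_sqnorm (R : realType) (dT : measure_display) (T : measurableType dT) d
  (x : T -> 'cV[R]_d) (M : 'M[R]_d) :
  (forall i : 'I_d, measurable_fun setT (fun w => x w i 0)) ->
  measurable_fun [set: T] (fun w => (sqnorm (M *m x w))%:E).
Proof. by move=> hx; apply/measurable_EFinP; exact: meas_sqnormR. Qed.

Theorem mainTheorem18 (R : realType) (n d : nat)
  (P : 'M[R]_n) (rho : 'rV[R]_n) (beta : R) (Phi : 'M[R]_(n, d)) (Phimax : R)
  (mu lambda gamma : R)
  (dT : measure_display) (T : measurableType dT) (Pr : probability T R)
  (x : T -> 'cV[R]_d) (t : nat) :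
  stochastic P -> irreducible_mx P -> stationary_dist P rho ->
  0 < beta < 1 ->
  (forall s : 'I_n, rnorm (row s Phi) <= Phimax) ->
  \rank Phi = d ->
  min_eigenvalue ((2%:R)^-1 *: (TD_A Phi rho P beta + (TD_A Phi rho P beta)^T)) mu ->
  0 < lambda ->
  0 < gamma ->
  gamma <= lambda / (lambda ^+ 2 + 2%:R * lambda * (1 + beta) * Phimax ^+ 2
                     + (1 + beta) ^+ 2 * Phimax ^+ 4) ->
  (forall i : 'I_d, measurable_fun setT (fun w => x w i 0)) ->
  Pr.-integrable setT (fun w => (sqnorm (x w))%:E) ->
  let C := 1%:M - gamma *: (TD_A Phi rho P beta + lambda%:M) in
  (\sum_(i < t.+1) 'E_Pr[fun w => sqnorm (C ^+ i *m x w)]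
     <= 'E_Pr[fun w => sqnorm (x w)] * ((gamma * (mu + lambda))^-1)%:E)%E.
Proof.
move=> sP _ sr hb hPhi _ hmin l0 g0 hg hx hint; cbv zeta.
set C := (1%:M - gamma *: _).
have [d0 mu0 hstep] := step sP sr hb hPhi hmin l0 g0 hg.
set c := gamma * (mu + lambda); set r := 1 - c.
have hC : forall v, dot (C *m v) (C *m v) <= r * dot v v := hstep.
have c0 : 0 < c by rewrite /c mulr_gt0 // ltr_wpDl.
have r1 : r < 1 by rewrite /r ltrBlDl ltrDr.
have r0 : 0 <= r.
  pose v1 : 'cV[R]_d := const_mx 1.
  have e1 : dot v1 v1 = d%:R.
    rewrite /dot (eq_bigr (fun _ => 1)) => [|i _]; last by rewrite !mxE mulr1.
    by rewrite sumr_const card_ord.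
  have := le_trans (dot_ge0 (C *m v1)) (hC v1); rewrite e1.
  by rewrite pmulr_lge0 // ltr0n.
have pw : forall i w, sqnorm (C ^+ i *m x w) <= r ^+ i * sqnorm (x w).
  move=> i w; elim: i => [|i IH]; first by rewrite expr0 mul1mx mul1r.
  rewrite exprS -mulmxE -mulmxA !sqnorm_dot.
  apply: le_trans (hC _) _; rewrite -sqnorm_dot exprS -mulrA ler_wpM2l //.
have a0ge : forall w, 0 <= sqnorm (x w) by move=> w; rewrite sqnorm_dot dot_ge0.
rewrite !expectation.unlock.
have ef := integrable_fin_num measurableT hint.
set E0 := (\int[Pr]_w (sqnorm (x w))%:E)%E in ef *.
have e0 : (0 <= fine E0).
  by rewrite fine_ge0 // /E0 integral_ge0 // => w _; rewrite lee_fin.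
rewrite -(fineK ef).
set e := fine E0.
have hi : forall i, (\int[Pr]_w (sqnorm (C ^+ i *m x w))%:E <= (e * r ^+ i)%:E)%E.
  move=> i.
  have -> : (e * r ^+ i)%:E = (\int[Pr]_w (sqnorm (x w) * r ^+ i)%:E)%E.
    rewrite (eq_integral (fun w => ((sqnorm (x w))%:E * (r ^+ i)%:E)%E)); last by move=> w _; rewrite EFinM.
    rewrite ge0_integralZr //; first by rewrite -/E0 -(fineK ef) -EFinM.
    - exact/measurable_EFinP/meas_sqnorm0.
    - by move=> w _; rewrite lee_fin.
    - by rewrite lee_fin exprn_ge0.
  apply: ge0_le_integral => //.
  - by move=> w _; rewrite lee_fin sqnorm_dot dot_ge0.
  - exact: meas_sqnorm.
  - apply/measurable_EFinP; apply: measurable_funM; [exact: meas_sqnorm0| exact: measurable_cst].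
  - by move=> w _; rewrite lee_fin mulrC pw.
have hs : (\sum_(i < t.+1) \int[Pr]_w (sqnorm (C ^+ i *m x w))%:E
           <= \sum_(i < t.+1) (e * r ^+ i)%:E)%E.
  by apply: lee_sum => i _; exact: hi.
apply: (le_trans hs).
rewrite sumEFin -EFinM lee_fin -mulr_sumr ler_wpM2l //.
have e1 : 1 - r = c by rewrite /r; ring.
by have := @geom_bound _ r t.+1 r0 r1; rewrite e1.
Qed.
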